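(* The unique solution $h$ of the system \[ h(\emptyset,J)=\delta_{\emptyset,J},\qquad h(I,J)=e^{2b_{\iota(I)}}\sum_{K\subset J}\Bigl(\prod_{i\in K}|\zeta_{i,\iota(I)}|\Bigr)h(I'\cup K,J\setminus K)\quad\text{if }I\ne\emptyset \] (for disjoint $I,J\subset\{1,\dots,n\}$, $I'=I\setminus\{\iota(I)\}$) is \[ h(I,J)=\Bigl(\prod_{i\in I\cup J}e^{2b_i}\Bigr)\sum_{G\in\mathcal{F}_I(J)}\prod_{\{i,j\}\in G}|\zeta_{ij}|. \]
   Context: $n\ge1$, $b_1,\dots,b_n\ge0$ real, $\zeta_{ij}=\zeta_{ji}$ complex for $1\le i,j\le n$. $\iota$ is a function assigning to each nonempty $I\subset\{1,\dots,n\}$ an element $\iota(I)\in I$. For disjoint $I,J$, $\mathcal{F}_I(J)$ denotes the set of forests on vertex set $I\cup J$ rooted in $I$, i.e. forests each of whose trees contains exactly one element of $I$ (a forest may have isolated vertices; $\mathcal{F}_\emptyset(\emptyset)$ consists of the empty graph and $\mathcal{F}_\emptyset(J)=\emptyset$ for $J\ne\emptyset$). Empty sums are $0$, empty products are $1$. *)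

(* Defs.v *)
From HB Require Import structures.
From mathcomp Require Import all_boot.
From Stdlib Require Import Reals ClassicalDescription.
Set Implicit Arguments. Unset Strict Implicit. Unset Printing Implicit Defensive.

Notation "\rsum_ ( i | P ) F" := (\big[Rplus/0%R]_(i | P) F)
  (at level 41, F at level 41, i at level 50).
Notation "\rsum_ ( i 'in' A ) F" := (\big[Rplus/0%R]_(i in A) F)
  (at level 41, F at level 41, i, A at level 50).
Notation "\rprod_ ( i | P ) F" := (\big[Rmult/1%R]_(i | P) F)
  (at level 36, F at level 36, i at level 50).
Notation "\rprod_ ( i 'in' A ) F" := (\big[Rmult/1%R]_(i in A) F)
  (at level 36, F at level 36, i, A at level 50).

(* A complex number is represented as a pair (real part, imaginary part). *)
Definition Cplx := (R * R)%type.
Definition Cmod (z : Cplx) : R := sqrt (z.1 * z.1 + z.2 * z.2)%R.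

(* Simple graphs on the vertex set 'I_n: a set of 2-element edges. *)
Definition adj n (G : {set {set 'I_n}}) : rel 'I_n :=
  fun x y => [set x; y] \in G.

Definition acyclic n (G : {set {set 'I_n}}) : Prop :=
  forall c : seq 'I_n, uniq c -> (2 < size c)%N -> ~~ cycle (adj G) c.

(* G \in F_I(J): a forest on the vertex set I :|: J each of whose trees
   (connected components) contains exactly one element of I. *)
Definition rooted_forest n (I J : {set 'I_n}) (G : {set {set 'I_n}}) : Prop :=
  [/\ (forall e, e \in G -> #|e| = 2 /\ e \subset I :|: J),
      acyclic G &
      (forall v, v \in I :|: J -> exists! i, i \in I /\ connect (adj G) v i)].

Definition rooted_forestb n (I J : {set 'I_n}) (G : {set {set 'I_n}}) : bool :=
  if excluded_middle_informative (rooted_forest I J G) then true else false.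

Definition graph_weight n (zeta : 'I_n -> 'I_n -> Cplx) (G : {set {set 'I_n}}) : R :=
  \big[Rmult/1%R]_(p : 'I_n * 'I_n | ((p.1 < p.2)%N && ([set p.1; p.2] \in G))) Cmod (zeta p.1 p.2).

Definition h_formula n (b : 'I_n -> R) (zeta : 'I_n -> 'I_n -> Cplx)
  (I J : {set 'I_n}) : R :=
  ((\rprod_(i in I :|: J) exp (2 * b i))
   * \rsum_(G | rooted_forestb I J G) graph_weight zeta G)%R.

Definition solves_system n (b : 'I_n -> R) (zeta : 'I_n -> 'I_n -> Cplx)
  (iota : {set 'I_n} -> 'I_n) (h : {set 'I_n} -> {set 'I_n} -> R) : Prop :=
  (forall J : {set 'I_n}, h set0 J = if J == set0 then 1%R else 0%R) /\
  (forall I J : {set 'I_n}, I != set0 -> [disjoint I & J] ->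
     h I J = (exp (2 * b (iota I)) *
       \rsum_(K in powerset J)
          ((\rprod_(i in K) Cmod (zeta i (iota I)))
           * h ((I :\ iota I) :|: K) (J :\: K)))%R).

(* Main.v *)
Require Import Defs.
From HB Require Import structures.
From mathcomp Require Import all_boot.
From Stdlib Require Import Reals Lra Lia ClassicalDescription.
Set Implicit Arguments. Unset Strict Implicit. Unset Printing Implicit Defensive.
Lemma Rplus_assoc' : associative Rplus. Proof. move=> *; ring. Qed.
Lemma Rmult_assoc' : associative Rmult. Proof. move=> *; ring. Qed.
HB.instance Definition _ := Monoid.isComLaw.Build R 0%R Rplus Rplus_assoc' Rplus_comm Rplus_0_l.
HB.instance Definition _ := Monoid.isComLaw.Build R 1%R Rmult Rmult_assoc' Rmult_comm Rmult_1_l.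
HB.instance Definition _ := Monoid.isMulLaw.Build R 0%R Rmult Rmult_0_l Rmult_0_r.
HB.instance Definition _ := Monoid.isAddLaw.Build R Rmult Rplus Rmult_plus_distr_r Rmult_plus_distr_l.

Section Graph.
Variable n : nat.
Implicit Types (G : {set {set 'I_n}}) (I J K : {set 'I_n}).

Lemma adjC G x y : adj G x y = adj G y x.
Proof. by rewrite /adj setUC. Qed.

Lemma connectC G x y : connect (adj G) x y = connect (adj G) y x.
Proof. by apply: sym_connect_sym => u v; rewrite adjC. Qed.

Lemma connect_inv (T : Type) G (f : 'I_n -> T) :
  (forall x y, adj G x y -> f x = f y) ->
  forall x y, connect (adj G) x y -> f x = f y.
Proof.
move=> H x y /connectP [p pth ->]; elim: p x pth => //= z p IH x /andP [a pth].
by rewrite (H _ _ a); apply: IH.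
Qed.

Definition RU (R V : {set 'I_n}) G :=
  forall v, v \in V -> exists! i, i \in R /\ connect (adj G) v i.

Lemma RU_eq R V G v i1 i2 : RU R V G -> v \in V -> i1 \in R -> i2 \in R ->
  connect (adj G) v i1 -> connect (adj G) v i2 -> i1 = i2.
Proof.
move=> ru vV i1R i2R c1 c2; case: (ru v vV) => x [_ u].
by rewrite -(u i1) ?(u i2).
Qed.

Variables (G G' : {set {set 'I_n}}) (r : 'I_n) (K : {set 'I_n}).
Hypothesis H1 : forall y z, adj G' y z = [&& adj G y z, y != r & z != r].
Hypothesis H2 : forall k, adj G r k = (k \in K).
Hypothesis rK : r \notin K.

Lemma adj'_adj y z : adj G' y z -> adj G y z.
Proof. by rewrite H1 => /and3P []. Qed.

Lemma connect'_connect y z : connect (adj G') y z -> connect (adj G) y z.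
Proof. by apply: connect_sub => u v /adj'_adj /connect1. Qed.

Lemma path'_nr x p : path (adj G') x p -> all (fun y => y != r) p.
Proof.
elim: p x => //= y p IH x /andP [a pth]; rewrite (IH y) ?andbT //.
by move: a; rewrite H1 => /and3P [].
Qed.

Lemma path_restrict x p : path (adj G) x p -> all (fun y => y != r) (x :: p) ->
  path (adj G') x p.
Proof.
move=> pth al.
have ee : {in [pred y | y != r] &, subrel (adj G) (adj G')}.
  by move=> u v; rewrite !inE => ur vr a; rewrite H1 a ur vr.
exact: (sub_in_path ee al pth).
Qed.

Lemma adjK k : k \in K -> adj G k r.
Proof. by rewrite adjC H2. Qed.

Lemma K_unique_b : acyclic G -> forall k1 k2, k1 \in K -> k2 \in K ->
  connect (adj G') k1 k2 -> k1 = k2.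
Proof.
move=> ac k1 k2 k1K k2K /connectP [p pth E]; move: E k2K.
case: (shortenP pth) => p' pth' up' _ -> k2K.
apply/eqP; apply: contraT => ne.
have k1r : k1 != r by apply: contraNneq rK => <-.
have nr := path'_nr pth'.
have p'0 : p' != [::] by apply: contraNneq ne => ->.
have := ac (r :: k1 :: p'); rewrite /=.
have -> : r \notin k1 :: p'.
  rewrite inE negb_or eq_sym k1r /=; apply/negP => rp.
  by move/allP: nr => /(_ _ rp); rewrite eqxx.
move: up' => /= /andP [-> ->].
rewrite ltnS ltnS lt0n size_eq0 p'0 => /(_ isT isT); rewrite rcons_path.
by rewrite H2 k1K (sub_path adj'_adj pth') /= adjC H2 k2K.
Qed.


Lemma acyclic_c : acyclic G' ->
  (forall k1 k2, k1 \in K -> k2 \in K -> connect (adj G') k1 k2 -> k1 = k2) ->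
  acyclic G.
Proof.
move=> ac' Ku c uc sc; apply/negP => cy.
case: (boolP (r \in c)) => rc.
- case: (rot_to rc) => i s E.
  have : cycle (adj G) (r :: s) by rewrite -E rot_cycle.
  have : uniq (r :: s) by rewrite -E rot_uniq.
  have : 2 < size (r :: s) by rewrite -E size_rot.
  case: s {E} => [|k1 p] //=; rewrite ltnS ltnS lt0n size_eq0 => p0.
  move=> /andP [rnin up] /andP [a pth].
  rewrite rcons_path in pth; case/andP: pth => pth al.
  have k1K : k1 \in K by rewrite -H2.
  have lK : last k1 p \in K by rewrite -H2 adjC.
  have pth' : path (adj G') k1 p.
    apply: (path_restrict pth); apply/allP => y yin; apply: contraNneq rnin => <-.
    exact: yin.
  have E : k1 = last k1 p by apply: Ku => //; apply/connectP; exists p.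
  case/andP: up => k1p _; case: p p0 {pth pth' al lK rnin} k1p E => // y q _ k1p E.
  by move: k1p; rewrite E /= mem_last.
- have ee : {in [pred y | y != r] &, subrel (adj G) (adj G')}.
    by move=> u v; rewrite !inE => ur vr a; rewrite H1 a ur vr.
  have al : all [pred y | y != r] c.
    by apply/allP => y yc; rewrite inE; apply: contraNneq rc => <-.
  by move/negP: (ac' c uc sc); apply; apply: (sub_in_cycle ee al cy).
Qed.

Lemma walk1 p : forall v, v != r -> path (adj G) v p -> r \in p ->
  exists2 k, k \in K & connect (adj G') v k.
Proof.
elim: p => // y p IH v vr /andP [a pth]; rewrite inE; case: (eqVneq y r) => [yr _ | yr /= rp].
- by exists v; [rewrite -H2 adjC -yr | exact: connect0].
- have [k kK ck] := IH y yr pth rp; exists k => //; apply: connect_trans ck.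
  by apply: connect1; rewrite H1 a vr yr.
Qed.

Lemma walk2 p v : v != r -> path (adj G) v p -> r \notin p ->
  connect (adj G') v (last v p).
Proof.
move=> vr pth rp; apply/connectP; exists p => //; apply: (path_restrict pth).
by rewrite /= vr; apply/allP => y yp; apply: contraNneq rp => <-.
Qed.

Section Roots.
Variables I J : {set 'I_n}.
Hypotheses (rI : r \in I) (dIJ : [disjoint I & J]) (KJ : K \subset J).
Local Notation R' := (I :\ r :|: K).
Local Notation V' := (I :\ r :|: K :|: (J :\: K)).

Lemma KR k : k \in K -> k \in R'.
Proof. by move=> kK; rewrite !inE kK orbT. Qed.
Lemma RV x : x \in R' -> x \in V'.
Proof. by move=> xR; rewrite inE xR. Qed.

Lemma root_c : RU R' V' G' -> RU I (I :|: J) G.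
Proof.
move=> ru.
have pu : forall v i, v \in V' -> i \in R' -> connect (adj G') v i ->
    [pick j in R' | connect (adj G') v j] = Some i.
  move=> v i vV iR ci; case: pickP => [j /andP [jR cj] | none].
  - by rewrite (RU_eq ru vV jR iR cj ci).
  - by move: (none i); rewrite iR ci.
pose rho v := if [pick j in R' | connect (adj G') v j] is Some i
              then (if i \in K then r else i) else r.
have c'r : forall j, connect (adj G') r j -> j = r.
  move=> j /connectP [[|x p] pth ->] //=; move: pth => /= /andP [a _].
  by rewrite H1 eqxx /= andbF in a.
have rho_r : rho r = r.
  rewrite /rho; case: pickP => [j /andP [jR /c'r jr] | //].
  by move: jR; rewrite jr !inE eqxx (negbTE rK).
have rho_K : forall k, k \in K -> rho k = r.
  by move=> k kK; rewrite /rho (pu k k (RV (KR kK)) (KR kK) (connect0 _ _)) kK.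
have rho_I : forall i, i \in I -> rho i = i.
  move=> i iI; case: (eqVneq i r) => [-> // | ir].
  have iR : i \in R' by rewrite !inE ir iI.
  have iK : i \notin K.
    by apply/negP => /(subsetP KJ) iJ; rewrite (disjointFl dIJ iJ) in iI.
  by rewrite /rho (pu i i (RV iR) iR (connect0 _ _)) (negbTE iK).
have rho_adj : forall y z, adj G y z -> rho y = rho z.
  have gen : forall y z, adj G y z -> y != r -> z != r -> rho y = rho z.
    move=> y z a yr zr; have a' : adj G' y z by rewrite H1 a yr zr.
    rewrite /rho.
    suff -> : [pick j in R' | connect (adj G') y j] =
              [pick j in R' | connect (adj G') z j] by [].
    apply: eq_pick => j /=; congr (_ && _); apply/idP/idP => c.
    - by apply: connect_trans c; rewrite connectC; apply: connect1.
    - exact: connect_trans (connect1 a') c.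
  move=> y z a; case: (eqVneq y r) => [yr | yr]; case: (eqVneq z r) => [zr | zr].
  - by rewrite yr zr.
  - by rewrite yr rho_r rho_K // -H2 -yr.
  - by rewrite zr rho_r rho_K // -H2 adjC -zr.
  - exact: gen.
move=> v vV.
have key : forall i, i \in I -> connect (adj G) v i -> i = rho v.
  move=> i iI ci; rewrite -{1}(rho_I i iI); apply: esym.
  exact: (connect_inv rho_adj ci).
have [w wI cw] : exists2 w, w \in I & connect (adj G) v w.
  case: (eqVneq v r) => [-> | vr]; first by exists r => //; apply: connect0.
  have vV' : v \in V'.
    by move: vV; rewrite !inE vr /=; case: (v \in I); case: (v \in K); case: (v \in J).
  case: (ru v vV') => i' [[i'R ci'] _].
  move: i'R; rewrite !inE => /orP [/andP [i'r i'I] | i'K].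
  - by exists i' => //; apply: connect'_connect.
  - exists r => //; apply: connect_trans (connect'_connect ci') _.
    by apply: connect1; exact: adjK.
exists w; split => //; move=> i [iI ci]; by rewrite (key w wI cw) (key i iI ci).
Qed.

Lemma root_b : acyclic G -> RU I (I :|: J) G -> RU R' V' G'.
Proof.
move=> ac ru v vV.
have rJ : r \in J = false := disjointFr dIJ rI.
have vr : v != r.
  by apply/eqP => vr; move: vV; rewrite vr !inE eqxx (negbTE rK) rJ /= ?andbF.
have vVb : v \in I :|: J.
  move: (subsetP KJ v); move: vV; rewrite !inE.
  by case: (v \in I); case: (v \in J); case: (v \in K); rewrite ?andbF ?orbF //= => _ /(_ isT).
case: (ru v vVb) => i [[iI ci] _].
move: ci => /connectP [p pth E].
have [w wR cw] : exists2 w, w \in R' & connect (adj G') v w.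
  case: (boolP (r \in p)) => rp.
  - have [k kK ck] := walk1 vr pth rp; exists k => //; exact: KR.
  - exists i; last by rewrite E; exact: walk2.
    have ir : i != r.
      apply/eqP => ie; have := mem_last v p.
      by rewrite -E ie inE eq_sym (negbTE vr) /= (negbTE rp).
    by rewrite !inE ir iI.
have U : forall r1 r2, r1 \in R' -> r2 \in R' -> connect (adj G') r1 r2 -> r1 = r2.
  move=> r1 r2 R1 R2 c12.
  have cG := connect'_connect c12.
  move: R1 R2; rewrite !inE => /orP [/andP [r1r r1I] | r1K] /orP [/andP [r2r r2I] | r2K].
  - by apply: (RU_eq ru _ r1I r2I (connect0 _ _) cG); rewrite inE r1I.
  - have r1V : r1 \in I :|: J by rewrite inE r1I.
    have := RU_eq ru r1V r1I rI (connect0 _ _) (connect_trans cG (connect1 (adjK r2K))).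
    by move=> h; rewrite h eqxx in r1r.
  - have rV : r \in I :|: J by rewrite inE rI.
    have cr : connect (adj G) r r1 by apply: connect1; rewrite H2.
    have := RU_eq ru rV rI r2I (connect0 _ _) (connect_trans cr cG).
    by move=> h; rewrite -h eqxx in r2r.
  - exact: (K_unique_b ac (k1:=r1) (k2:=r2) r1K r2K c12).
exists w; split => // x [xR cx].
by apply: U => //; rewrite connectC in cw; exact: (connect_trans cw cx).
Qed.

End Roots.

End Graph.


Section Forest.
Variable n : nat.
Implicit Types (G : {set {set 'I_n}}) (I J K : {set 'I_n}).

Definition star (r : 'I_n) K : {set {set 'I_n}} := [set [set r; k] | k in K].
Definition nbr (r : 'I_n) G : {set 'I_n} := [set k | [set r; k] \in G].

Lemma star_r r K e : e \in star r K -> r \in e.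
Proof. by case/imsetP => k _ ->; rewrite set21. Qed.

Lemma forest_b I J G r : r \in I -> [disjoint I & J] -> rooted_forest I J G ->
  nbr r G \subset J /\
  rooted_forest (I :\ r :|: nbr r G) (J :\: nbr r G) (G :\: star r (nbr r G)).
Proof.
move=> rI dIJ [E ac ru].
set K := nbr r G; set S := star r K.
have F1 : forall e, e \in G -> r \in e -> e \in S.
  move=> e eG re; have [/eqP /cards2P [x [y [xy ee]]] _] := E e eG.
  move: re; rewrite ee in_set2 => /orP [/eqP rx | /eqP ry].
  - apply/imsetP; exists y; last by rewrite rx.
    by rewrite inE rx -ee.
  - apply/imsetP; exists x; last by rewrite ry setUC.
    by rewrite inE ry setUC -ee.
have HH2 : forall k, adj G r k = (k \in K) by move=> k; rewrite /adj inE.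
have HH1 : forall y z, adj (G :\: S) y z = [&& adj G y z, y != r & z != r].
  move=> y z; rewrite /adj in_setD; case: (boolP ([set y; z] \in G)) => g;
    rewrite ?andbF //= andbT.
  apply/idP/idP.
  - apply: contraR; rewrite negb_and !negbK => /orP [/eqP yr | /eqP zr].
    + by apply: F1 => //; rewrite yr set21.
    + by apply: F1 => //; rewrite zr set22.
  - case/andP => yr zr; apply/negP => /star_r; rewrite in_set2.
    by rewrite eq_sym (negbTE yr) eq_sym (negbTE zr).
have rK : r \notin K.
  apply/negP; rewrite /K inE => g; have [c _] := E _ g.
  by rewrite cards2 eqxx in c.
have KJ : K \subset J.
  apply/subsetP => k kK; have g : [set r; k] \in G by move: kK; rewrite /K inE.
  have [c sub] := E _ g.
  have kr : k != r by apply: contraNneq rK => <-.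
  have := subsetP sub k (set22 _ _); rewrite in_setU => /orP [kI | //].
  have kV : k \in I :|: J by rewrite inE kI.
  have ck : connect (adj G) k r by apply: connect1; rewrite adjC HH2.
  by have := RU_eq ru kV kI rI (connect0 _ _) ck => h; rewrite h eqxx in kr.
split => //; split.
- move=> e; rewrite in_setD => /andP [eS eG]; have [c sub] := E e eG; split => //.
  apply/subsetP => x xe.
  have xr : x != r by apply: contraNneq eS => xr; apply: F1 => //; rewrite -xr.
  have := subsetP sub x xe; move: (subsetP KJ x).
  rewrite !inE xr /=.
  by case: (x \in I); case: (x \in J); case: ([set r; x] \in G) => //= /(_ isT).
- move=> c uc sc; apply/negP => cy; move/negP: (ac c uc sc); apply.
  by apply: (sub_cycle _ cy) => y z; rewrite HH1 => /and3P [].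
- exact: (root_b HH1 HH2 rK rI dIJ KJ ac ru).
Qed.

Lemma forest_c I J G' r K : r \in I -> [disjoint I & J] -> K \subset J ->
  rooted_forest (I :\ r :|: K) (J :\: K) G' ->
  [/\ rooted_forest I J (G' :|: star r K), nbr r (G' :|: star r K) = K
     & (G' :|: star r K) :\: star r K = G'].
Proof.
move=> rI dIJ KJ [E ac ru].
set S := star r K; set G := G' :|: S.
have rJ : r \in J = false := disjointFr dIJ rI.
have rK : r \notin K by apply/negP => /(subsetP KJ); rewrite rJ.
have E' : forall e, e \in G' -> r \notin e.
  move=> e eG; have [_ sub] := E e eG; apply/negP => /(subsetP sub).
  by rewrite !inE eqxx (negbTE rK) rJ /= ?andbF.
have HH2 : forall k, adj G r k = (k \in K).
  move=> k; rewrite /adj in_setU.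
  have -> : ([set r; k] \in G') = false.
    by apply/negP => /E'; rewrite set21.
  apply/imsetP/idP => [[k' k'K ee] | kK]; last by exists k.
  have : k' \in [set r; k] by rewrite ee set22.
  rewrite in_set2 => /orP [/eqP k'r | /eqP <- //].
  by rewrite k'r in k'K; rewrite k'K in rK.
have HH1 : forall y z, adj G' y z = [&& adj G y z, y != r & z != r].
  move=> y z; rewrite /adj in_setU.
  case: (boolP ([set y; z] \in G')) => g /=.
  - have := E' _ g; rewrite in_set2 negb_or => /andP [ry rz].
    by rewrite eq_sym ry eq_sym rz.
  - apply/esym; apply/negP => /and3P [/star_r]; rewrite in_set2.
    by case/orP => /eqP <-; rewrite eqxx.
have VIJ : forall x, x \in I :\ r :|: K :|: (J :\: K) -> x \in I :|: J.
  move=> x; move: (subsetP KJ x); rewrite !inE.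
  by case: (x \in I); case: (x \in J); case: (x \in K) => //=; rewrite ?andbF //= => /(_ isT).
have nb : nbr r G = K by apply/setP => k; rewrite inE -HH2.
split => //.
- split.
  + move=> e; rewrite in_setU => /orP [eG | eS].
    * have [c sub] := E e eG; split => //; apply/subsetP => x /(subsetP sub).
      exact: VIJ.
    * case/imsetP: eS => k kK ->; split.
      - by rewrite cards2; case: eqP => // kr; rewrite kr kK in rK.
      - apply/subsetP => x; rewrite in_set2 => /orP [/eqP -> | /eqP ->].
        + by rewrite inE rI.
        + by rewrite inE (subsetP KJ k kK) orbT.
  + refine (acyclic_c HH1 HH2 ac _) => k1 k2 k1K k2K c12.
    have k1R : k1 \in I :\ r :|: K by rewrite inE k1K orbT.
    have k2R : k2 \in I :\ r :|: K by rewrite inE k2K orbT.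
    by apply: (RU_eq ru _ k1R k2R (connect0 _ _) c12); rewrite inE k1R.
  + exact: (root_c HH1 HH2 rK rI dIJ KJ ru).
- apply/setP => e; rewrite in_setD in_setU.
  case: (boolP (e \in S)) => eS /=; last by rewrite orbF.
  by apply/esym/negP => /E'; rewrite (star_r eS).
Qed.

End Forest.

Section Sums.
Variable n : nat.
Variable zeta : 'I_n -> 'I_n -> Cplx.
Hypothesis hzeta : forall i j, zeta i j = zeta j i.

Lemma mem_star (r : 'I_n) (K : {set 'I_n}) k : r \notin K -> ([set r; k] \in star r K) = (k \in K).
Proof.
move=> rK; apply/imsetP/idP => [[k' k'K ee] | kK]; last by exists k.
have : k' \in [set r; k] by rewrite ee set22.
rewrite in_set2 => /orP [/eqP k'r | /eqP <- //].
by rewrite k'r in k'K; rewrite k'K in rK.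
Qed.

Lemma weight_star (G' : {set {set 'I_n}}) r (K : {set 'I_n}) : r \notin K ->
  (forall e, e \in G' -> r \notin e) ->
  graph_weight zeta (G' :|: star r K) =
  ((\rprod_(k in K) Cmod (zeta k r)) * graph_weight zeta G')%R.
Proof.
move=> rK E'; rewrite /graph_weight.
rewrite (bigID (fun p : 'I_n * 'I_n => [set p.1; p.2] \in star r K)) /=.
congr (_ * _)%R; last first.
  apply: eq_bigl => p; rewrite in_setU.
  case: (boolP ([set p.1; p.2] \in star r K)) => s; rewrite ?andbT ?andbF ?orbF //.
  case: (boolP ([set p.1; p.2] \in G')) => g //=; last by rewrite andbF.
  by have := E' _ g; rewrite (star_r s).
rewrite (eq_bigl (fun p : 'I_n * 'I_n => (p.1 < p.2)%N && ([set p.1; p.2] \in star r K)));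
  last by move=> p; rewrite in_setU; case: ([set p.1; p.2] \in star r K);
    rewrite ?orbT ?andbT ?andbF.
pose h (k : 'I_n) := if (k < r)%N then (k, r) else (r, k).
pose h' (p : 'I_n * 'I_n) := if p.1 == r then p.2 else p.1.
rewrite (reindex_onto h h').
  apply: eq_big => k.
  - rewrite /h /h'; case: (ltnP k r) => kr /=.
    + have kr' : k != r by apply/eqP => e; rewrite e ltnn in kr.
      by rewrite kr setUC mem_star // (negbTE kr') eqxx andbT.
    + case: (eqVneq k r) => [-> | kr']; first by rewrite ltnn (negbTE rK).
      have rk : (r < k)%N by rewrite ltn_neqAle kr andbT; apply: contra kr' => /eqP e; apply/eqP/val_inj.
      by rewrite rk mem_star // eqxx eqxx andbT.
  - rewrite /h; case: (ltnP k r) => kr _ //=.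
    by rewrite hzeta.
move=> [a c] /= /andP [ac /imsetP [k kK ee]].
have aS : a \in [set r; k] by rewrite -ee set21.
have cS : c \in [set r; k] by rewrite -ee set22.
have acn : a != c by apply/eqP => e; rewrite e ltnn in ac.
rewrite /h /h' /=; case: (eqVneq a r) => [ar | ar].
- rewrite ar in ac acn *; rewrite ltnNge (ltnW ac) /=.
  done.
- move: aS; rewrite in_set2 (negbTE ar) /= => /eqP ak.
  move: cS; rewrite in_set2 => /orP [/eqP cr | /eqP ck]; last by rewrite ak ck eqxx in acn.
  by rewrite cr in ac *; rewrite ac.
Qed.

Lemma rfbP (I J : {set 'I_n}) G : reflect (rooted_forest I J G) (rooted_forestb I J G).
Proof. by rewrite /rooted_forestb; case: excluded_middle_informative => h; constructor. Qed.

Lemma sum_rec (I J : {set 'I_n}) r : r \in I -> [disjoint I & J] ->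
  \rsum_(G | rooted_forestb I J G) graph_weight zeta G =
  \rsum_(K in powerset J) ((\rprod_(k in K) Cmod (zeta k r)) *
     (\rsum_(G | rooted_forestb (I :\ r :|: K) (J :\: K) G) graph_weight zeta G))%R.
Proof.
move=> rI dIJ.
have rJ : r \in J = false := disjointFr dIJ rI.
rewrite (partition_big (nbr r) (fun K => K \in powerset J)) /=; last first.
  by move=> G /rfbP fG; rewrite powersetE; case: (forest_b rI dIJ fG).
apply: eq_bigr => K; rewrite powersetE => KJ.
have rK : r \notin K by apply/negP => /(subsetP KJ); rewrite rJ.
rewrite big_distrr /=.
rewrite (reindex_onto (fun G' => G' :|: star r K) (fun G => G :\: star r K)); last first.
  move=> G /andP [/rfbP fG /eqP nb]; apply/setP => e; rewrite in_setU in_setD.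
  case: (boolP (e \in star r K)) => eS /=; last by rewrite orbF.
  by case/imsetP: eS => k kK ->; rewrite -nb inE in kK.
apply: eq_big => G'.
- apply/idP/idP.
  + move=> /andP [/andP [/rfbP fG /eqP nb] /eqP dd]; apply/rfbP.
    have [_ f'] := forest_b rI dIJ fG.
    by rewrite nb dd in f'.
  + move=> /rfbP f'; have [fG nb dd] := forest_c rI dIJ KJ f'.
    by rewrite nb dd !eqxx !andbT; apply/rfbP.
- move=> /andP [/andP [/rfbP fG /eqP nb] /eqP dd].
  have [_ [E _ _]] := forest_b rI dIJ fG; rewrite nb dd in E.
  rewrite weight_star //.
  move=> e eG; have [_ sub] := E e eG; apply/negP => /(subsetP sub).
  by rewrite !inE eqxx (negbTE rK) rJ /= ?andbF.
Qed.

End Sums.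

Lemma sum_base n (zeta : 'I_n -> 'I_n -> Cplx) (J : {set 'I_n}) :
  \rsum_(G | rooted_forestb set0 J G) graph_weight zeta G =
  (if J == set0 then 1 else 0)%R.
Proof.
case: eqP => [-> | /eqP J0].
- rewrite (big_pred1 set0).
    rewrite /graph_weight big_pred0 // => p; by rewrite in_set0 andbF.
  move=> G; apply/rfbP/eqP => [[E _ _] | ->].
  + apply/setP => e; rewrite in_set0; apply/negP => eG; have [c sub] := E e eG.
    by move: sub; rewrite setU0 subset0 => /eqP e0; rewrite e0 cards0 in c.
  + split.
    * by move=> e; rewrite in_set0.
    * by move=> [|x [|y p]] //= _ _; rewrite /adj in_set0.
    * by move=> v; rewrite setU0 in_set0.
- rewrite big_pred0 // => G; apply/rfbP => [[_ _ ru]].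
  case/set0Pn: J0 => v vJ.
  have := ru v; rewrite inE vJ orbT => /(_ isT) [i [[iI _] _]].
  by rewrite in_set0 in iI.
Qed.

Lemma formula_solves n (b : 'I_n -> R) (zeta : 'I_n -> 'I_n -> Cplx)
  (iota : {set 'I_n} -> 'I_n)
  (hzeta : forall i j, zeta i j = zeta j i)
  (hiota : forall I : {set 'I_n}, I != set0 -> iota I \in I) :
  solves_system b zeta iota (h_formula b zeta).
Proof.
split.
- move=> J; rewrite /h_formula sum_base.
  by case: eqP => [-> | _]; rewrite ?set0U ?big_set0; ring.
- move=> I J I0 dIJ; set r := iota I; have rI : r \in I := hiota I I0.
  have rJ : r \in J = false := disjointFr dIJ rI.
  rewrite /h_formula (sum_rec hzeta rI dIJ) (bigD1 r) /=; last by rewrite inE rI.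
  have PV : forall K : {set 'I_n}, K \subset J ->
    (\rprod_(i in I :\ r :|: K :|: (J :\: K)) exp (2 * b i) =
    \rprod_(i | (i \in I :|: J) && (i != r)) exp (2 * b i))%R.
    move=> K KJ; apply: eq_bigl => i; move: (subsetP KJ i); rewrite !inE.
    case: (eqVneq i r) => [-> | ir] /=.
    + by rewrite rI rJ; case: (r \in K) => // /(_ isT).
    + by case: (i \in I); case: (i \in J); case: (i \in K) => //= /(_ isT).
  rewrite Rmult_assoc; congr (_ * _)%R.
  rewrite big_distrr; apply: eq_bigr => K; rewrite powersetE => KJ.
  rewrite /= (PV K KJ).
  have E : forall x y z : R, (x * (y * z) = y * (x * z))%R by move=> *; ring.
  exact: E.
Qed.

Lemma solves_unique n (b : 'I_n -> R) (zeta : 'I_n -> 'I_n -> Cplx)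
  (iota : {set 'I_n} -> 'I_n)
  (hiota : forall I : {set 'I_n}, I != set0 -> iota I \in I) h1 h2 :
  solves_system b zeta iota h1 -> solves_system b zeta iota h2 ->
  forall I J : {set 'I_n}, [disjoint I & J] -> h1 I J = h2 I J.
Proof.
move=> [B1 R1] [B2 R2] I J.
suff : forall m (I J : {set 'I_n}), #|I| + 2 * #|J| < m -> [disjoint I & J] -> h1 I J = h2 I J.
  by apply; apply: ltnSn.
elim=> [|m IH] {}I {}J //.
rewrite ltnS => le dIJ.
case: (eqVneq I set0) => [-> | I0]; first by rewrite B1 B2.
rewrite R1 // R2 //; congr (_ * _)%R.
apply: eq_bigr => K; rewrite powersetE => KJ; congr (_ * _)%R.
set r := iota I; have rI : r \in I := hiota I I0.
have rJ : r \in J = false := disjointFr dIJ rI.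
apply: IH.
- have h1' := (leq_card_setU (I :\ r) K).1.
  have h2' := cardsD1 r I; rewrite rI /= in h2'.
  have h3 := cardsDS KJ.
  have h4 := subset_leq_card KJ.
  move: le h1' h2' h3 h4.
  move: #|I :\ r :|: K| #|I :\ r| #|K| #|J :\: K| #|I| #|J| => u a k d i j.
  move=> /leP le /leP h1' h2' h3 /leP h4; apply/leP.
  rewrite h2' h3 in le *; rewrite -?plusE -?minusE -?multE in le h1' h4 *.
  lia.
- rewrite -setI_eq0; apply/eqP/setP => x; rewrite !inE.
  have := disjointFr dIJ (x := x).
  by case: (x \in I); case: (x \in J); case: (x \in K); rewrite ?andbF //= => /(_ isT).
Qed.

Theorem mainTheorem7 (n : nat) (b : 'I_n -> R) (zeta : 'I_n -> 'I_n -> Cplx)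
  (iota : {set 'I_n} -> 'I_n)
  (hn : (0 < n)%N)
  (hb : forall i, (0 <= b i)%R)
  (hzeta : forall i j, zeta i j = zeta j i)
  (hiota : forall I : {set 'I_n}, I != set0 -> iota I \in I) :
  solves_system b zeta iota (h_formula b zeta) /\
  (forall h, solves_system b zeta iota h ->
     forall I J : {set 'I_n}, [disjoint I & J] -> h I J = h_formula b zeta I J).
Proof.
have S := formula_solves b hzeta hiota.
split => // h Sh; exact: (solves_unique hiota Sh S).
Qed.
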